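(* Let $G$ be a $k$-group and $A$ a continuous $G$-module (in the $k$-sense). Then the row augmentation $j_{h,k}^*\colon C_{lc,k}^*(G,A)\hookrightarrow\mathrm{Tot}\,A_{lc,k}^{*,*}(G,A)^G$ induces an isomorphism in cohomology.
   Context: For a topological space $X$, $\mathrm{k}X$ denotes its $k$-ification; products of $k$-spaces are taken as $\mathrm{k}(X\times Y)$ and denoted $\times_k$. A $k$-group is a group $G$ with a topology such that multiplication is continuous on $\mathrm{k}(G\times G)$; a continuous $G$-module here is an abelian topological group $A$ with an action of $G$ by automorphisms continuous on $\mathrm{k}(G\times A)$. For an identity neighbourhood $U$ put $\Gamma_U^0:=G$ and, for $q\ge1$, $\Gamma_U^q:=\{(g_0,\dots,g_q)\in G^{q+1}\mid g_i^{-1}g_j\in U\ \forall i,j\}$. $G$ acts on maps $f\colon G^{n+1}\to A$ by $(g.f)(g_0,\dots,g_n)=g.f(g^{-1}g_0,\dots,g^{-1}g_n)$, with differential $df(g_0,\dots,g_{n+1})=\sum_i(-1)^if(g_0,\dots,\widehat{g_i},\dots,g_{n+1})$. $C_{lc,k}^n(G,A)$ is the complex of $G$-equivariant maps $f\colon G^{n+1}\to A$ such that for some identity neighbourhood $U$ the restriction to $\mathrm{k}\Gamma_U^n$ is continuous. $A_{lc,k}^{p,q}(G,A)$ is the group of maps $f\colon G^{p+1}\times G^{q+1}\to A$ such that for some identity neighbourhood $U$ the restriction to $\mathrm{k}G^{p+1}\times_k\mathrm{k}\Gamma_U^q$ is continuous, with $d_hf(x_0,\dots,x_{p+1},\vec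 y)=\sum_i(-1)^if(x_0,\dots,\widehat{x_i},\dots,x_{p+1},\vec y)$ and $d_vf(\vec x,y_0,\dots,y_{q+1})=(-1)^p\sum_i(-1)^if(\vec x,y_0,\dots,\widehat{y_i},\dots,y_{q+1})$. $G$ acts by $(g.f)(\vec x,\vec y)=g.f(g^{-1}\vec x,g^{-1}\vec y)$; $\mathrm{Tot}\,A_{lc,k}^{*,*}(G,A)^G$ is the total complex of the fixed-point double complex (differential $d_h+d_v$), and $j_{h,k}(f)(x_0,\vec y)=f(\vec y)$. *)

(* Defs.v *)
From HB Require Import structures.
From mathcomp Require Import all_boot all_order all_algebra.
From mathcomp Require Import monoid.
From mathcomp Require Import all_classical all_reals all_analysis.

Set Implicit Arguments.
Unset Strict Implicit.
Unset Printing Implicit Defensive.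

Import Order.TTheory GRing.Theory Num.Theory.
Local Open Scope classical_set_scope.
Local Open Scope ring_scope.

(** Groups carrying a topology (no compatibility axiom yet). *)
#[short(type="topGroupType")]
HB.structure Definition TopGroup := {G of Group G & Topological G}.

(** Test spaces for k-ification (Strickland's convention): compact Hausdorff. *)
Definition test_space (K : topologicalType) : Prop :=
  compact [set: K] /\ hausdorff_space K.

(** [kopen S B]: the trace [B `&` S] is open in k(S), where S carries the
    subspace topology of X: for every compact Hausdorff K and every
    continuous u : K -> S, u^-1(B) is open in K.  (A continuous map into
    the subspace S is a continuous map into X with values in S.) *)
Definition kopen (X : topologicalType) (S : set X) (B : set X) : Prop :=
  forall K : topologicalType, test_space K ->
  forall u : K -> X, continuous u -> (forall k, S (u k)) ->
  open (u @^-1` B).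

Definition kcont_into (K X : topologicalType) (S : set X) (u : K -> X) : Prop :=
  (forall k, S (u k)) /\ (forall B : set X, kopen S B -> open (u @^-1` B)).

(** [kprod_open S B]: the trace of B on X x S is open in
    k(kX x kS) = kX x_k kS.  A continuous map K -> kX x kS into the product
    is a pair of continuous maps into the factors. *)
Definition kprod_open (X Y : topologicalType) (S : set Y) (B : set (X * Y)) :
  Prop :=
  forall K : topologicalType, test_space K ->
  forall (u : K -> X) (v : K -> Y),
  kcont_into [set: X] u -> kcont_into S v ->
  open ((fun k => (u k, v k)) @^-1` B).

Definition kcont_on (X Y : topologicalType) (S : set X) (f : X -> Y) : Prop :=
  forall B : set Y, open B -> kopen S (f @^-1` B).

Definition is_kgroup (G : topGroupType) : Prop :=
  forall B : set G, open B -> kopen [set: G * G] ((fun z => monoid.mul z.1 z.2) @^-1` B).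

Definition is_kmodule (G : topGroupType) (A : topologicalZmodType)
  (act : G -> A -> A) : Prop :=
  [/\ forall a, act monoid.one a = a,
      forall g h a, act (monoid.mul g h) a = act g (act h a),
      forall g a b, act g (a + b) = act g a + act g b &
      forall B : set A, open B ->
        kopen [set: G * A] ((fun z => act z.1 z.2) @^-1` B)].

Section Cochains.
Variables (G : topGroupType) (A : topologicalZmodType) (act : G -> A -> A).

Definition Gpow (m : nat) := prod_topology (fun _ : 'I_m => G).

Definition lmul m (g : G) (x : Gpow m) : Gpow m := fun i => monoid.mul g (x i).

Definition Gamma (U : set G) (q : nat) : set (Gpow q.+1) :=
  match q with
  | 0 => setT
  | _.+1 => [set x | forall i j, U (monoid.mul (monoid.inv (x i)) (x j))]
  end.
Arguments Gamma U q : clear implicits.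

Definition face m (i : 'I_m.+2) (x : Gpow m.+2) : Gpow m.+1 :=
  fun j => x (lift i j).

Definition Ccochain (n : nat) (f : Gpow n.+1 -> A) : Prop :=
  (forall g x, act g (f (lmul (monoid.inv g) x)) = f x) /\
  exists U : set G, nbhs (monoid.one : G) U /\ kcont_on (Gamma U n) f.

Definition dC (n : nat) (f : Gpow n.+1 -> A) : Gpow n.+2 -> A :=
  fun x => \sum_(i < n.+2) f (face i x) *~ ((-1) ^+ i).

Definition Abi p q (f : Gpow p.+1 -> Gpow q.+1 -> A) : Prop :=
  exists U : set G, nbhs (monoid.one : G) U /\
  forall B : set A, open B ->
    kprod_open (Gamma U q) [set z | B (f z.1 z.2)].

Definition Ginvariant p q (f : Gpow p.+1 -> Gpow q.+1 -> A) : Prop :=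
  forall g x y, act g (f (lmul (monoid.inv g) x) (lmul (monoid.inv g) y)) = f x y.

Definition dh p q (f : Gpow p.+1 -> Gpow q.+1 -> A) : Gpow p.+2 -> Gpow q.+1 -> A :=
  fun x y => \sum_(i < p.+2) f (face i x) y *~ ((-1) ^+ i).

Definition dv p q (f : Gpow p.+1 -> Gpow q.+1 -> A) : Gpow p.+1 -> Gpow q.+2 -> A :=
  fun x y => (\sum_(i < q.+2) f x (face i y) *~ ((-1) ^+ i)) *~ ((-1) ^+ p).

(** Families of bicochains indexed by bidegree (p,q); an element of
    Tot^n is such a family where only the components with p+q = n matter. *)
Definition bifam := forall p q : nat, Gpow p.+1 -> Gpow q.+1 -> A.

Definition bifam0 : bifam := fun p q x y => 0.
Definition bifam_sub (F F' : bifam) : bifam := fun p q x y => F p q x y - F' p q x y.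

Definition TotElem (n : nat) (F : bifam) : Prop :=
  forall p q, (p + q)%N = n -> Abi (F p q) /\ Ginvariant (F p q).

Definition eqTot (n : nat) (F F' : bifam) : Prop :=
  forall p q, (p + q)%N = n -> F p q = F' p q.

Definition DTot (F : bifam) : bifam :=
  fun p q x y =>
    (match p return Gpow p.+1 -> A with
     | 0 => fun _ => 0
     | p'.+1 => fun x => dh (F p' q) x y
     end) x +
    (match q return Gpow q.+1 -> A with
     | 0 => fun _ => 0
     | q'.+1 => fun y => dv (F p q') x y
     end) y.

(** the row augmentation j_{h,k} : C^n -> Tot^n, landing in bidegree (0,n):
    j(f)(x_0, y) = f(y)  (when q = n, [inord] is the identity on 'I_(n+1)). *)
Definition jhk (n : nat) (f : Gpow n.+1 -> A) : bifam :=
  fun p q x y =>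
    if (p == 0)%N && (q == n) then f (fun i : 'I_n.+1 => y (inord i)) else 0.

Definition TotCobound (n : nat) (X : bifam) : Prop :=
  match n with
  | 0 => eqTot 0 X bifam0
  | m.+1 => exists E, TotElem m E /\ eqTot m.+1 X (DTot E)
  end.

Definition CCobound (n : nat) : (Gpow n.+1 -> A) -> Prop :=
  match n return (Gpow n.+1 -> A) -> Prop with
  | 0 => fun f => f = (fun _ => 0)
  | m.+1 => fun f => exists e, Ccochain e /\ f = dC e
  end.


End Cochains.
Arguments Gamma [G] U q.
Arguments CCobound [G A] act n.
Arguments bifam0 [G A] p q.
Arguments bifam_sub [G A] F F' p q.
Arguments DTot [G A] F p q.
Arguments jhk [G A n] f p q.
Arguments TotElem [G A] act n%_nat F.
Arguments eqTot [G A] n%_nat F F'.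
Arguments TotCobound [G A] act n%_nat X.

(* Main.v *)
Require Import Defs.
From HB Require Import structures.
From mathcomp Require Import all_boot all_order all_algebra.
From mathcomp Require Import monoid.
From mathcomp Require Import all_classical all_reals all_analysis.
Set Implicit Arguments.
Unset Strict Implicit.
Unset Printing Implicit Defensive.
Import Order.TTheory GRing.Theory Num.Theory.
Local Open Scope classical_set_scope.
Local Open Scope ring_scope.

From mathcomp Require Import zify ring.

Section Alg.
Variables (G : topGroupType) (A : topologicalZmodType).

Lemma sumMz n (F : 'I_n -> A) z : (\sum_(i < n) F i) *~ z = \sum_(i < n) F i *~ z.
Proof. apply: (big_morph (fun x : A => x *~ z)); [exact: mulrzDl | exact: mul0rz]. Qed.

Definition sig m (p : 'I_m.+3 * 'I_m.+2) : 'I_m.+3 * 'I_m.+2 :=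
  if (p.1 <= p.2)%N then (inord p.2.+1, inord p.1) else (inord p.2, inord p.1.-1).

Lemma sig_invol m : involutive (@sig m).
Proof.
case=> i j; have hi := ltn_ord i; have hj := ltn_ord j.
rewrite /sig /=; case: (leqP i j) => h /=.
  rewrite !inordK; try lia.
  have -> : (j.+1 <= i)%N = false by lia.
  by congr pair; apply: val_inj; rewrite /= inordK //; lia.
rewrite !inordK; try lia.
have -> : (j <= i.-1)%N = true by lia.
by congr pair; apply: val_inj; rewrite /= inordK //; lia.
Qed.

Lemma bump_comm i j k : (i <= j)%N -> bump j.+1 (bump i k) = bump i (bump j k).
Proof. move=> h; rewrite /bump. do 4 (case: leqP => ?); lia. Qed.

Lemma dCdC m (g : Gpow G m.+1 -> A) x : dC (dC g) x = 0.
Proof.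
rewrite /dC.
under eq_bigr => i _ do rewrite sumMz.
rewrite pair_bigA /=.
rewrite (bigID (fun p : 'I_m.+3 * 'I_m.+2 => (p.1 <= p.2)%N)) /=.
rewrite [X in _ + X](reindex_inj (can_inj (@sig_invol m))) /=.
rewrite [X in _ + X](eq_bigl (fun p : 'I_m.+3 * 'I_m.+2 => (p.1 <= p.2)%N)); last first.
  case=> i j; have hi := ltn_ord i; have hj := ltn_ord j.
  rewrite /sig /=; case: (leqP i j) => h /=; rewrite !inordK; lia.
rewrite -big_split /= big1 // => -[i j] /= h.
have hi := ltn_ord i; have hj := ltn_ord j.
rewrite /sig /= h /= !inordK; try lia.
have -> : face (inord i : 'I_m.+2) (face (inord j.+1 : 'I_m.+3) x) = face j (face i x).
  apply/funext => k; rewrite /face; congr (x _); apply: val_inj => /=.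
  rewrite !inordK; try lia. by rewrite bump_comm.
by rewrite exprS mulN1r mulrNz mulrzAC subrr.
Qed.

Lemma dhdh p q (f : Gpow G p.+1 -> Gpow G q.+1 -> A) x y : dh (dh f) x y = 0.
Proof. exact: (dCdC (fun x' => f x' y) x). Qed.

Lemma dvdv p q (f : Gpow G p.+1 -> Gpow G q.+1 -> A) x y : dv (dv f) x y = 0.
Proof.
rewrite /dv.
rewrite (eq_bigr (fun i : 'I_q.+3 => (\sum_(i0 < q.+2) f x (face i0 (face i y)) *~ (-1) ^+ i0) *~ (-1) ^+ i *~ (-1) ^+ p)); last by move=> i _; rewrite mulrzAC.
rewrite -sumMz. have := dCdC (f x) y. rewrite /dC => ->. by rewrite !mul0rz.
Qed.

Lemma dhdv p q (f : Gpow G p.+1 -> Gpow G q.+1 -> A) x y :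
  dh (dv f) x y + dv (dh f) x y = 0.
Proof.
suff -> : dv (dh f) x y = - dh (dv f) x y by rewrite subrr.
rewrite /dh /dv exprS mulN1r mulrNz; congr (- _).
rewrite sumMz. under eq_bigr => j _ do rewrite !sumMz.
rewrite exchange_big /=; apply: eq_bigr => i _.
rewrite -mulrzA sumMz; apply: eq_bigr => j _.
by rewrite -!mulrzA; congr (_ *~ _); ring.
Qed.
End Alg.
Lemma prod_cont (K : topologicalType) (I : eqType) (T : I -> topologicalType)
  (f : K -> prod_topology T) : (forall i, continuous (fun k => f k i)) -> continuous f.
Proof.
move=> ctsf x; apply/cvg_sup.
move=> i; move: x; apply/(@continuousP _ (initial_topology (@^~ i))) => A [B oB E].
rewrite -E.
have -> : f @^-1` ((@^~ i) @^-1` B) = (fun k => f k i) @^-1` B by [].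
by move/continuousP : (ctsf i); apply.
Qed.

Lemma add_cont (K : topologicalType) (A : topologicalZmodType) (a b : K -> A) :
  continuous a -> continuous b -> continuous (fun k => a k + b k).
Proof.
move=> ca cb x.
apply: (@continuous2_cvg _ _ _ _ _ _ a b (fun u v => u + v)) => //.
  exact: (@add_continuous _ (a x, b x)).
  exact: ca. exact: cb.
Qed.

Lemma opp_cont (K : topologicalType) (A : topologicalZmodType) (a : K -> A) :
  continuous a -> continuous (fun k => - a k).
Proof.
move=> ca x; exact: (continuous_comp (ca x) (@opp_continuous A (a x))).
Qed.

Lemma kcont_intoP (K X : topologicalType) (S : set X) (u : K -> X) :
  test_space K -> kcont_into S u <-> (continuous u /\ forall k, S (u k)).
Proof.
move=> tK; split.
  case=> hS hB; split => //; apply/continuousP => B oB; apply: hB.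
  by move=> K' tK' t ct _; move/continuousP : ct; apply.
by case=> cu hS; split => // B kB; exact: kB K tK u cu hS.
Qed.

Lemma coord_cont (K : topologicalType) (I : eqType) (T : I -> topologicalType)
  (w : K -> prod_topology T) (j : I) : continuous w -> continuous (fun k => w k j).
Proof.
move=> cw x; exact: (continuous_comp (cw x) (@proj_continuous I T j (w x))).
Qed.

Section Main.
Variables (G : topGroupType) (A : topologicalZmodType) (act : G -> A -> A).
Hypothesis hadd : forall g a b, act g (a + b) = act g a + act g b.

Definition gcons m (a : G) (x : Gpow G m) : Gpow G m.+1 :=
  fun i => match unlift ord0 i with Some j => x j | None => a end.

Lemma face_cont (K : topologicalType) m (i : 'I_m.+2) (w : K -> Gpow G m.+2) :
  continuous w -> continuous (fun k => face i (w k)).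
Proof. by move=> cw; apply: prod_cont => j; exact: (@coord_cont _ _ _ w (lift i j) cw). Qed.

Lemma gcons_cont (K : topologicalType) m (a : K -> G) (w : K -> Gpow G m) :
  continuous a -> continuous w -> continuous (fun k => gcons (a k) (w k)).
Proof.
move=> ca cw; apply: prod_cont => i; rewrite /gcons.
case: (unlift ord0 i) => [j|]; [exact: (@coord_cont _ _ _ w j cw) | exact: ca].
Qed.

Lemma const_cont (K : topologicalType) m (a : K -> G) :
  continuous a -> continuous (fun k => (fun _ : 'I_m => a k) : Gpow G m).
Proof. by move=> ca; apply: prod_cont => j; exact: ca. Qed.

Definition good p q (U : set G) (f : Gpow G p.+1 -> Gpow G q.+1 -> A) :=
  forall K : topologicalType, test_space K ->
  forall (u : K -> Gpow G p.+1) (v : K -> Gpow G q.+1),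
  continuous u -> continuous v -> (forall k, Gamma U q (v k)) ->
  continuous (fun k => f (u k) (v k)).

Lemma AbiP p q (f : Gpow G p.+1 -> Gpow G q.+1 -> A) :
  Abi f <-> exists U, nbhs (monoid.one : G) U /\ good U f.
Proof.
split.
  case=> U [nU hU]; exists U; split => // K tK u v cu cv hv.
  apply/continuousP => B oB; apply: (hU B oB K tK).
    by apply/kcont_intoP.
  by apply/kcont_intoP.
case=> U [nU hU]; exists U; split => // B oB K tK u v /kcont_intoP [] // cu _.
move=> /kcont_intoP [] // cv hv.
by move/continuousP : (hU K tK u v cu cv hv); apply.
Qed.

Lemma act0 g : act g 0 = 0.
Proof.
have h := hadd g 0 0; rewrite addr0 in h.
by apply: (@addrI _ (act g 0)); rewrite addr0 -h.
Qed.

Lemma actN g a : act g (- a) = - act g a.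
Proof. by apply/eqP; rewrite -addr_eq0 -hadd addNr act0. Qed.

Lemma act_sum g n (F : 'I_n -> A) : act g (\sum_(i < n) F i) = \sum_(i < n) act g (F i).
Proof. exact: (big_morph (act g) (hadd g) (act0 g)). Qed.

Lemma sgnE (a : A) i : a *~ ((-1) ^+ i) = if odd i then - a else a.
Proof. by rewrite -signr_odd; case: (odd i); rewrite ?expr1 ?expr0 ?mulrN1z ?mulr1z. Qed.

Lemma act_sgn g a i : act g (a *~ ((-1) ^+ i)) = act g a *~ ((-1) ^+ i).
Proof. by rewrite !sgnE; case: (odd i); rewrite ?actN. Qed.

Lemma Gamma_mono (U U' : set G) q x : U `<=` U' -> Gamma U q x -> Gamma U' q x.
Proof. by case: q x => [|q] x // sU hx i j; apply: sU; apply: hx. Qed.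

Lemma Gamma_face (U : set G) q (i : 'I_q.+2) y : Gamma U q.+1 y -> Gamma U q (face i y).
Proof. by case: q i y => [|q] i y // hy a b; apply: hy. Qed.

Lemma good_mono p q (U U' : set G) (f : Gpow G p.+1 -> Gpow G q.+1 -> A) :
  U `<=` U' -> good U' f -> good U f.
Proof.
move=> sU hf K tK u v cu cv hv; apply: hf => // k; exact: (Gamma_mono sU).
Qed.

Lemma Abi_zero p q : Abi (fun (x : Gpow G p.+1) (y : Gpow G q.+1) => (0 : A)).
Proof.
apply/AbiP; exists setT; split; first exact: filterT.
by move=> K tK u v _ _ _; exact: cst_continuous.
Qed.

Lemma Abi_add p q (f g : Gpow G p.+1 -> Gpow G q.+1 -> A) :
  Abi f -> Abi g -> Abi (fun x y => f x y + g x y).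
Proof.
move=> /AbiP [U [nU hU]] /AbiP [V [nV hV]]; apply/AbiP; exists (U `&` V).
split; first exact: filterI.
have hU' : good (U `&` V) f by apply: (good_mono _ hU); move=> z [].
have hV' : good (U `&` V) g by apply: (good_mono _ hV); move=> z [].
move=> K tK u v cu cv hv; apply: add_cont; [exact: hU' | exact: hV'].
Qed.

Lemma Abi_opp p q (f : Gpow G p.+1 -> Gpow G q.+1 -> A) :
  Abi f -> Abi (fun x y => - f x y).
Proof.
move=> /AbiP [U [nU hU]]; apply/AbiP; exists U; split => //.
move=> K tK u v cu cv hv; apply: opp_cont; exact: hU.
Qed.

Lemma Abi_sgn p q (f : Gpow G p.+1 -> Gpow G q.+1 -> A) i :
  Abi f -> Abi (fun x y => f x y *~ ((-1) ^+ i)).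
Proof.
move=> hf; have -> : (fun x y => f x y *~ ((-1) ^+ i)) =
   (fun x y => if odd i then - f x y else f x y).
  by apply/funext => x; apply/funext => y; rewrite sgnE.
by case: (odd i) => //; exact: Abi_opp.
Qed.

Lemma Abi_sum p q n (F : 'I_n -> Gpow G p.+1 -> Gpow G q.+1 -> A) :
  (forall i, Abi (F i)) -> Abi (fun x y => \sum_(i < n) F i x y).
Proof.
elim: n F => [|n IH] F hF.
  have -> : (fun x y => \sum_(i < 0) F i x y) = (fun _ _ => 0).
    by apply/funext => x; apply/funext => y; rewrite big_ord0.
  exact: Abi_zero.
have -> : (fun x y => \sum_(i < n.+1) F i x y) =
   (fun x y => \sum_(i < n) F (widen_ord (leqnSn n) i) x y + F ord_max x y).
  by apply/funext => x; apply/funext => y; rewrite big_ord_recr.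
by apply: Abi_add => //; apply: IH.
Qed.

Lemma Abi_dh p q (f : Gpow G p.+1 -> Gpow G q.+1 -> A) : Abi f -> Abi (dh f).
Proof.
move=> hf; apply: (@Abi_sum _ _ _ (fun i x y => f (face i x) y *~ ((-1) ^+ i))).
move=> i; apply: (@Abi_sgn _ _ (fun x y => f (face i x) y)).
move: hf => /AbiP [U [nU hU]]; apply/AbiP; exists U; split => //.
move=> K tK u v cu cv hv; apply: (hU K tK (fun k => face i (u k))) => //.
exact: face_cont.
Qed.

Lemma Abi_dv p q (f : Gpow G p.+1 -> Gpow G q.+1 -> A) : Abi f -> Abi (dv f).
Proof.
move=> hf; apply: (@Abi_sgn _ _ (fun x y => \sum_(i < q.+2) f x (face i y) *~ ((-1) ^+ i))).
apply: (@Abi_sum _ _ _ (fun i x y => f x (face i y) *~ ((-1) ^+ i))).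
move=> i; apply: (@Abi_sgn _ _ (fun x y => f x (face i y))).
move: hf => /AbiP [U [nU hU]]; apply/AbiP; exists U; split => //.
move=> K tK u v cu cv hv; apply: (hU K tK u (fun k => face i (v k))) => //.
  exact: face_cont.
by move=> k; apply: Gamma_face.
Qed.

Lemma Abi_hh p q (f : Gpow G p.+2 -> Gpow G q.+1 -> A) :
  Abi f -> Abi (fun x y => f (gcons (y ord0) x) y).
Proof.
move=> /AbiP [U [nU hU]]; apply/AbiP; exists U; split => //.
move=> K tK u v cu cv hv; apply: (hU K tK (fun k => gcons (v k ord0) (u k))) => //.
apply: gcons_cont => //; exact: (@coord_cont _ _ _ v ord0 cv).
Qed.

Lemma dh_ext p q (f g : Gpow G p.+1 -> Gpow G q.+1 -> A) x y :
  (forall x y, f x y = g x y) -> dh f x y = dh g x y.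
Proof. by move=> h; rewrite /dh; apply: eq_bigr => i _; rewrite h. Qed.

Lemma dv_ext p q (f g : Gpow G p.+1 -> Gpow G q.+1 -> A) x y :
  (forall x y, f x y = g x y) -> dv f x y = dv g x y.
Proof. by move=> h; rewrite /dv; congr (_ *~ _); apply: eq_bigr => i _; rewrite h. Qed.

Lemma dh_add p q (f g : Gpow G p.+1 -> Gpow G q.+1 -> A) x y :
  dh (fun x y => f x y + g x y) x y = dh f x y + dh g x y.
Proof. by rewrite /dh -big_split; apply: eq_bigr => i _; rewrite mulrzDl. Qed.

Lemma dv_add p q (f g : Gpow G p.+1 -> Gpow G q.+1 -> A) x y :
  dv (fun x y => f x y + g x y) x y = dv f x y + dv g x y.
Proof.
by rewrite /dv -mulrzDl -big_split; congr (_ *~ _); apply: eq_bigr => i _; rewrite mulrzDl.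
Qed.

Lemma dh_sub p q (f g : Gpow G p.+1 -> Gpow G q.+1 -> A) x y :
  dh (fun x y => f x y - g x y) x y = dh f x y - dh g x y.
Proof. by rewrite /dh -sumrB; apply: eq_bigr => i _; rewrite mulrzBl. Qed.

Lemma dv_sub p q (f g : Gpow G p.+1 -> Gpow G q.+1 -> A) x y :
  dv (fun x y => f x y - g x y) x y = dv f x y - dv g x y.
Proof.
by rewrite /dv -mulrzBl -sumrB; congr (_ *~ _); apply: eq_bigr => i _; rewrite mulrzBl.
Qed.

Lemma dh0 p q x y : dh (fun (_ : Gpow G p.+1) (_ : Gpow G q.+1) => (0 : A)) x y = 0.
Proof. by rewrite /dh big1 // => i _; rewrite mul0rz. Qed.

Lemma dv0 p q x y : dv (fun (_ : Gpow G p.+1) (_ : Gpow G q.+1) => (0 : A)) x y = 0.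
Proof. by rewrite /dv big1 ?mul0rz // => i _; rewrite mul0rz. Qed.

Lemma DTot00 (E : bifam G A) x y : DTot E 0 0 x y = 0.
Proof. by rewrite /DTot /= addr0. Qed.
Lemma DTot0S (E : bifam G A) q x y : DTot E 0 q.+1 x y = dv (E 0 q) x y.
Proof. by rewrite /DTot /= add0r. Qed.
Lemma DTotS0 (E : bifam G A) p x y : DTot E p.+1 0 x y = dh (E p 0) x y.
Proof. by rewrite /DTot /= addr0. Qed.
Lemma DTotSS (E : bifam G A) p q x y :
  DTot E p.+1 q.+1 x y = dh (E p q.+1) x y + dv (E p.+1 q) x y.
Proof. by []. Qed.

Arguments DTot00 : clear implicits.
Arguments DTot0S : clear implicits.
Arguments DTotS0 : clear implicits.
Arguments DTotSS : clear implicits.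

Lemma DD (E : bifam G A) p q x y : DTot (DTot E) p q x y = 0.
Proof.
case: p x => [|p] x; case: q y => [|q] y.
- exact: DTot00.
- rewrite DTot0S; case: q y => [|q] y.
    by rewrite (dv_ext _ _ (DTot00 E)) dv0.
  by rewrite (dv_ext _ _ (DTot0S E q)) dvdv.
- rewrite DTotS0; case: p x => [|p] x.
    by rewrite (dh_ext _ _ (DTot00 E)) dh0.
  by rewrite (dh_ext _ _ (DTotS0 E p)) dhdh.
- rewrite DTotSS; case: p x => [|p] x; case: q y => [|q] y.
  + rewrite (dh_ext _ _ (DTot0S E 0)) (dv_ext _ _ (DTotS0 E 0)); exact: dhdv.
  + rewrite (dh_ext _ _ (DTot0S E q.+1)) (dv_ext _ _ (DTotSS E 0 q)) dv_add dvdv addr0.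
    exact: dhdv.
  + rewrite (dh_ext _ _ (DTotSS E p 0)) (dv_ext _ _ (DTotS0 E p.+1)) dh_add dhdh add0r.
    exact: dhdv.
  + rewrite (dh_ext _ _ (DTotSS E p q.+1)) (dv_ext _ _ (DTotSS E p.+1 q)) dh_add dv_add.
    by rewrite dhdh dvdv add0r addr0 dhdv.
Qed.

Lemma DTot_sub (E F : bifam G A) p q x y :
  DTot (bifam_sub E F) p q x y = DTot E p q x y - DTot F p q x y.
Proof.
case: p x => [|p] x; case: q y => [|q] y.
- by rewrite !DTot00 subrr.
- by rewrite !DTot0S dv_sub.
- by rewrite !DTotS0 dh_sub.
- by rewrite !DTotSS dh_sub dv_sub addrACA opprD.
Qed.

Definition bifam_add (E F : bifam G A) : bifam G A := fun p q x y => E p q x y + F p q x y.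

Lemma DTot_add (E F : bifam G A) p q x y :
  DTot (bifam_add E F) p q x y = DTot E p q x y + DTot F p q x y.
Proof.
case: p x => [|p] x; case: q y => [|q] y.
- by rewrite !DTot00 addr0.
- by rewrite !DTot0S dv_add.
- by rewrite !DTotS0 dh_add.
- by rewrite !DTotSS dh_add dv_add addrACA.
Qed.

Lemma gcons_lmul m g a (x : Gpow G m) :
  gcons (monoid.mul g a) (lmul g x) = lmul g (gcons a x).
Proof. by apply/funext => i; rewrite /gcons /lmul; case: (unlift ord0 i). Qed.

Lemma face_gcons0 m a (x : Gpow G m.+1) : face ord0 (gcons a x) = x.
Proof. by apply/funext => k; rewrite /face /gcons liftK. Qed.

Lemma face_gconsS m a (x : Gpow G m.+2) (j : 'I_m.+2) :
  face (lift ord0 j) (gcons a x) = gcons a (face j x).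
Proof.
apply/funext => k; rewrite /face /gcons; case: (unliftP ord0 k) => [k'|] ->.
  have -> : lift (lift ord0 j) (lift ord0 k') = lift ord0 (lift j k').
    apply: val_inj => /=; rewrite /bump; do 4 (case: leqP => ?); lia.
  by rewrite !liftK.
have -> : lift (lift ord0 j) ord0 = ord0 by apply: val_inj.
by rewrite unlift_none.
Qed.

Lemma dh_hh p q (f : Gpow G p.+2 -> Gpow G q.+1 -> A) x y :
  dh (fun x' y' => f (gcons (y' ord0) x') y') x y + dh f (gcons (y ord0) x) y = f x y.
Proof.
rewrite [X in _ + X]/dh big_ord_recl face_gcons0 expr0 mulr1z.
under [X in _ + (_ + X)]eq_bigr => j _ do rewrite face_gconsS /= exprS mulN1r mulrNz.
by rewrite sumrN addrCA /dh subrr addr0.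
Qed.

Lemma Ginv_zero p q : Ginvariant act (fun (_ : Gpow G p.+1) (_ : Gpow G q.+1) => (0 : A)).
Proof. by move=> g x y; rewrite act0. Qed.

Lemma Ginv_add p q (f g : Gpow G p.+1 -> Gpow G q.+1 -> A) :
  Ginvariant act f -> Ginvariant act g -> Ginvariant act (fun x y => f x y + g x y).
Proof. by move=> hf hg h x y; rewrite hadd hf hg. Qed.

Lemma Ginv_sub p q (f g : Gpow G p.+1 -> Gpow G q.+1 -> A) :
  Ginvariant act f -> Ginvariant act g -> Ginvariant act (fun x y => f x y - g x y).
Proof. by move=> hf hg h x y; rewrite hadd actN hf hg. Qed.

Lemma Ginv_dh p q (f : Gpow G p.+1 -> Gpow G q.+1 -> A) :
  Ginvariant act f -> Ginvariant act (dh f).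
Proof.
move=> hf g x y; rewrite /dh act_sum; apply: eq_bigr => i _.
rewrite act_sgn; congr (_ *~ _); exact: hf.
Qed.

Lemma Ginv_dv p q (f : Gpow G p.+1 -> Gpow G q.+1 -> A) :
  Ginvariant act f -> Ginvariant act (dv f).
Proof.
move=> hf g x y; rewrite /dv act_sgn act_sum; congr (_ *~ _); apply: eq_bigr => i _.
rewrite act_sgn; congr (_ *~ _); exact: hf.
Qed.

Lemma Ginv_hh p q (f : Gpow G p.+2 -> Gpow G q.+1 -> A) :
  Ginvariant act f -> Ginvariant act (fun x y => f (gcons (y ord0) x) y).
Proof.
move=> hf g x y /=; rewrite /lmul.
have -> : (fun i => monoid.mul (monoid.inv g) (y i)) = lmul (monoid.inv g) y by [].
rewrite gcons_lmul; exact: hf.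
Qed.

Lemma TotElem_D m (E : bifam G A) : TotElem act m E -> TotElem act m.+1 (DTot E).
Proof.
move=> hE [|p] [|q] hpq.
- by [].
- have -> : DTot E 0 q.+1 = dv (E 0 q).
    by apply/funext => x; apply/funext => y; rewrite DTot0S.
  have [h1 h2] := hE 0%N q ltac:(lia).
  by split; [apply: Abi_dv | apply: Ginv_dv].
- have -> : DTot E p.+1 0 = dh (E p 0).
    by apply/funext => x; apply/funext => y; rewrite DTotS0.
  have [h1 h2] := hE p 0%N ltac:(lia).
  by split; [apply: Abi_dh | apply: Ginv_dh].
- have -> : DTot E p.+1 q.+1 = (fun x y => dh (E p q.+1) x y + dv (E p.+1 q) x y) by [].
  have [h1 h2] := hE p q.+1 ltac:(lia).
  have [h3 h4] := hE p.+1 q ltac:(lia).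
  split; [apply: Abi_add; [apply: Abi_dh | apply: Abi_dv] |
          apply: Ginv_add; [apply: Ginv_dh | apply: Ginv_dv]] => //.
Qed.

Lemma TotElem_sub n (E F : bifam G A) :
  TotElem act n E -> TotElem act n F -> TotElem act n (bifam_sub E F).
Proof.
move=> hE hF p q hpq; have [h1 h2] := hE p q hpq; have [h3 h4] := hF p q hpq.
split; last exact: Ginv_sub.
have -> : bifam_sub E F p q = (fun x y => E p q x y + (- F p q x y)) by [].
by apply: Abi_add => //; apply: Abi_opp.
Qed.

Lemma TotElem_add n (E F : bifam G A) :
  TotElem act n E -> TotElem act n F -> TotElem act n (bifam_add E F).
Proof.
move=> hE hF p q hpq; have [h1 h2] := hE p q hpq; have [h3 h4] := hF p q hpq.
by split; [apply: Abi_add | apply: Ginv_add].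
Qed.

Lemma TotElem0 n : TotElem act n (@bifam0 G A).
Proof. by move=> p q _; split; [apply: Abi_zero | apply: Ginv_zero]. Qed.

Lemma DTot0 p q x y : DTot (@bifam0 G A) p q x y = 0.
Proof.
case: p x => [|p] x; case: q y => [|q] y.
- exact: DTot00.
- by rewrite DTot0S dv0.
- by rewrite DTotS0 dh0.
- by rewrite DTotSS dh0 dv0 addr0.
Qed.

Lemma DTotS_van (X : bifam G A) p q x y :
  (forall q', q = q'.+1 -> forall x y, X p.+1 q' x y = 0) ->
  DTot X p.+1 q x y = dh (X p q) x y.
Proof.
case: q y => [|q] y h; first by rewrite DTotS0.
by rewrite DTotSS (dv_ext _ _ (h q erefl)) dv0 addr0.
Qed.

Definition CobRel d (X X' : bifam G A) : Prop :=
  (d = 0%N -> eqTot 0 X X') /\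
  (forall m, d = m.+1 -> exists E, TotElem act m E /\ eqTot m.+1 (bifam_sub X X') (DTot E)).

Lemma eqTotP n (F F' : bifam G A) :
  (forall p q, (p + q)%N = n -> forall x y, F p q x y = F' p q x y) -> eqTot n F F'.
Proof. by move=> h p q hpq; apply/funext => x; apply/funext => y; apply: h. Qed.

Lemma stair d (X Y : bifam G A) :
  TotElem act d X ->
  (forall p q, (p + q)%N = d.+1 -> (0 < p)%N -> forall x y, Y p q x y = 0) ->
  (forall p q, (p + q)%N = d.+1 -> forall x y, DTot X p q x y = Y p q x y) ->
  forall k, (k <= d)%N -> exists X' : bifam G A,
   [/\ TotElem act d X',
       (forall p q, (p + q)%N = d.+1 -> forall x y, DTot X' p q x y = Y p q x y),
       (forall p q, (p + q)%N = d -> (d - k < p)%N -> forall x y, X' p q x y = 0) &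
       CobRel d X X'].
Proof.
move=> hX hY hDX; elim=> [_|k IH hk].
  exists X; split => //; first by move=> p q hpq hp; lia.
  split; first by move=> _ p q _.
  move=> m hd; exists (@bifam0 G A); split; first exact: TotElem0.
  apply: eqTotP => p q _ x y; rewrite DTot0; exact: subrr.
have [X' [hX' hDX' hvan hcob]] := IH ltac:(lia).
have [p1 hp1] : exists p1, (d - k)%N = p1.+1 by exists (d - k).-1; lia.
have hvan' : forall p q, (p + q)%N = d -> (p1.+1 < p)%N -> forall x y, X' p q x y = 0.
  by move=> p q hpq hp; apply: hvan => //; lia.
have hdh : forall x y, dh (X' p1.+1 k) x y = 0.
  move=> x y; rewrite -(@DTotS_van X' p1.+1 k x y); last first.
    by move=> q' hq'; apply: hvan'; lia.
  by rewrite hDX' ?hY //; lia.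
pose E' : bifam G A := fun p q x y =>
  if (p == p1) && (q == k) then X' p.+1 q (gcons (y ord0) x) y else 0.
have hE'0 : forall p q, ~~ ((p == p1) && (q == k)) -> forall x y, E' p q x y = 0.
  by move=> p q h x y; rewrite /E' (negbTE h).
have hdhE : forall x y, dh (E' p1 k) x y = X' p1.+1 k x y.
  move=> x y; rewrite -(dh_hh (X' p1.+1 k) x y) hdh addr0.
  by apply: dh_ext => x' y'; rewrite /E' !eqxx.
have hE' : TotElem act (d.-1) E'.
  move=> p q hpq; case hc : ((p == p1) && (q == k)).
    move/andP: hc => [/eqP hp /eqP hq]; subst p q.
    have -> : E' p1 k = (fun x y => X' p1.+1 k (gcons (y ord0) x) y).
      by apply/funext => x; apply/funext => y; rewrite /E' !eqxx.
    have [h1 h2] := hX' p1.+1 k ltac:(lia).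
    by split; [apply: Abi_hh | apply: Ginv_hh].
  have -> : E' p q = (fun _ _ => 0).
    by apply/funext => x; apply/funext => y; rewrite hE'0 // hc.
  by split; [apply: Abi_zero | apply: Ginv_zero].
have hd : d = (d.-1).+1 by lia.
exists (bifam_sub X' (DTot E')); split.
- apply: TotElem_sub => //; rewrite hd; exact: TotElem_D.
- by move=> p q hpq x y; rewrite DTot_sub DD subr0; apply: hDX'.
- move=> p q hpq hp x y; rewrite /bifam_sub.
  have [hlt|heq] : (p1.+1 < p)%N \/ p = p1.+1 by lia.
    rewrite hvan' //; case: p x hpq hp hlt => [|p] x hpq hp hlt; first lia.
    rewrite DTotS_van; last first.
      by move=> q' _ x' y'; apply: hE'0; apply/negP => /andP [/eqP ? _]; lia.
    by rewrite (dh_ext _ _ (hE'0 p q ltac:(apply/negP => /andP [/eqP ? _]; lia))) dh0 subr0.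
  subst p; have hq : q = k by lia.
  subst q; rewrite DTotS_van ?hdhE ?subrr //.
  by move=> q' _ x' y'; apply: hE'0; apply/negP => /andP [/eqP ? _]; lia.
- split; first by move=> h0; lia.
  move=> m hm; have [_ hc] := hcob; have [E [hE heq]] := hc m hm.
  exists (bifam_add E E'); split.
    apply: TotElem_add => //; have -> : m = d.-1 by lia. exact: hE'.
  rewrite -hm; apply: eqTotP => p q hpq x y.
  rewrite DTot_add -(heq p q ltac:(lia)) /bifam_sub.
  by rewrite opprB addrCA [RHS]addrC.
Qed.

Lemma inord_id n (y : Gpow G n.+1) : (fun i : 'I_n.+1 => y (inord i)) = y.
Proof. by apply/funext => i; congr y; apply: val_inj; rewrite /= inordK. Qed.

Lemma jhk_0n n (f : Gpow G n.+1 -> A) x y : jhk f 0 n x y = f y.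
Proof. by rewrite /jhk !eqxx /= inord_id. Qed.

Lemma jhk_S n (f : Gpow G n.+1 -> A) p q x y : jhk f p.+1 q x y = 0.
Proof. by []. Qed.

Lemma extract n (Z : Gpow G 1 -> Gpow G n.+1 -> A) :
  Abi Z -> Ginvariant act Z -> (forall x y, dh Z x y = 0) ->
  let e := fun y : Gpow G n.+1 => Z (fun _ => y ord0) y in
  Ccochain act e /\ forall x y, Z x y = e y.
Proof.
move=> hA hG hd e; split.
  split; first by move=> g y; exact: (hG g (fun _ => y ord0) y).
  move: hA => /AbiP [U [nU hU]]; exists U; split => // B oB K tK u cu hu.
  have := hU K tK (fun k => (fun _ => u k ord0)) u _ cu hu.
  move=> /(_ _) /continuousP; apply => //.
  by apply: const_cont; exact: (@coord_cont _ _ _ u ord0 cu).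
move=> x y; have := hd (gcons (y ord0) x) y.
rewrite /dh big_ord_recl big_ord1 face_gcons0.
have -> : face (lift ord0 ord0) (gcons (y ord0) x) = (fun _ => y ord0).
  apply/funext => j; rewrite /face /gcons.
  have -> : lift (lift ord0 ord0) j = ord0 by apply: val_inj; rewrite /= (ord1 j).
  by rewrite unlift_none.
rewrite expr0 expr1 mulr1z mulrN1z => /eqP; rewrite subr_eq0 => /eqP.
by [].
Qed.

Lemma cob_trans n (X X' Z : bifam G A) :
  CobRel n X X' ->
  (forall p q, (p + q)%N = n -> forall x y, Z p q x y = X p q x y - X' p q x y) ->
  TotCobound act n Z.
Proof.
case: n => [|m] [c0 cS] hZ.
  apply: eqTotP => p q hpq x y; rewrite hZ // (c0 erefl p q hpq) subrr; by [].
have [E [hE heq]] := cS m erefl; exists E; split => //.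
apply: eqTotP => p q hpq x y; rewrite hZ // -(heq p q hpq); by [].
Qed.
End Main.


Theorem mainTheorem10 (G : topGroupType) (A : topologicalZmodType)
  (act : G -> A -> A) :
  is_kgroup G -> is_kmodule act ->
  forall n : nat,
  [/\ (forall f : Gpow G n.+1 -> A, Ccochain act f -> TotElem act n (jhk f)),
      (forall f : Gpow G n.+1 -> A, Ccochain act f -> eqTot n.+1 (DTot (jhk f)) (jhk (dC f))),
      (forall F, TotElem act n F -> eqTot n.+1 (DTot F) (@bifam0 G A) ->
         exists f : Gpow G n.+1 -> A, [/\ Ccochain act f, dC f = (fun _ => 0%R) &
                       TotCobound act n (bifam_sub F (jhk f))]) &
      (forall f : Gpow G n.+1 -> A, Ccochain act f -> dC f = (fun _ => 0%R) ->
         TotCobound act n (jhk f) -> CCobound act n f)].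
Proof.
move=> _ [_ _ hadd _] n; split.
- move=> f [hfG [U [nU hU]]] p q hpq.
  case hc : ((p == 0%N) && (q == n)).
    move/andP: hc => [/eqP hp /eqP hq]; subst p q.
    have -> : jhk f 0 n = (fun x y => f y).
      by apply/funext => x; apply/funext => y; rewrite jhk_0n.
    split; last by move=> g x y; exact: hfG.
    apply/AbiP; exists U; split => // K tK u v cu cv hv.
    by apply/continuousP => B oB; exact: (hU B oB K tK v cv hv).
  have -> : jhk f p q = (fun _ _ => 0).
    by apply/funext => x; apply/funext => y; rewrite /jhk hc.
  by split; [apply: Abi_zero | apply: Ginv_zero].
- move=> f _; apply: eqTotP => -[|p] q hpq x y.
    have hq : q = n.+1 by lia.
    subst q; rewrite DTot0S (dv_ext _ _ (jhk_0n f)) jhk_0n /dv expr0 mulr1z.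
    by [].
  rewrite jhk_S DTotS_van; last by move=> q' _ x' y'.
  rewrite /dh /jhk; case hc: ((p == 0%N) && (q == n)).
    move/andP: hc => [/eqP hp _]; subst p.
    by rewrite big_ord_recl big_ord1 expr0 expr1 mulr1z mulrN1z subrr.
  by rewrite big1 // => i _; rewrite mul0rz.
- move=> F hF hD.
  have hDX : forall p q, (p + q)%N = n.+1 -> forall x y,
      DTot F p q x y = (@bifam0 G A) p q x y.
    by move=> p q hpq x y; rewrite (hD p q hpq).
  have [X' [hX' hDX' hvan hcob]] := stair hadd hF (fun _ _ _ _ _ _ => erefl) hDX (leqnn n).
  have hdh : forall x y, dh (X' 0%N n) x y = 0.
    move=> x y; rewrite -(@DTotS_van _ _ X' 0 n x y); last first.
      by move=> q' hq'; apply: hvan; lia.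
    by rewrite hDX' //; lia.
  have [h1 h2] := hX' 0%N n erefl.
  have [hC hZ] := extract h1 h2 hdh.
  set f := fun y => _ in hC hZ.
  exists f; split => //.
    apply/funext => y.
    have := hDX' 0%N n.+1 erefl (fun _ => y ord0) y.
    rewrite DTot0S (dv_ext _ _ hZ) /dv expr0 mulr1z => h; exact: h.
  apply: (cob_trans hcob) => p q hpq x y.
  case: p x hpq => [|p] x hpq.
    have hq : q = n by lia.
    subst q; by rewrite /bifam_sub jhk_0n hZ.
  by rewrite /bifam_sub jhk_S hvan //; lia.
- case: n => [|m] f hf hdc hcob.
    apply/funext => y; have := hcob 0%N 0%N erefl.
    move=> /(congr1 (fun h => h (fun _ => y ord0) y)).
    by rewrite jhk_0n.
  have [E [hE heq]] := hcob.
  have hY : forall p q, (p + q)%N = m.+1 -> (0 < p)%N -> forall x y, jhk f p q x y = 0.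
    by move=> [|p] q _ // _ x y.
  have hDX : forall p q, (p + q)%N = m.+1 -> forall x y, DTot E p q x y = jhk f p q x y.
    by move=> p q hpq x y; rewrite (heq p q hpq).
  have [X' [hX' hDX' hvan hcob']] := stair hadd hE hY hDX (leqnn m).
  have hdh : forall x y, dh (X' 0%N m) x y = 0.
    move=> x y; rewrite -(@DTotS_van _ _ X' 0 m x y); last first.
      by move=> q' hq'; apply: hvan; lia.
    by rewrite hDX' //; lia.
  have [h1 h2] := hX' 0%N m erefl.
  have [hC hZ] := extract h1 h2 hdh.
  set e := fun y => _ in hC hZ.
  exists e; split => //; apply/funext => y.
  have := hDX' 0%N m.+1 erefl (fun _ => y ord0) y.
  rewrite DTot0S (dv_ext _ _ hZ) /dv expr0 mulr1z jhk_0n => h; exact: (esym h).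
Qed.
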